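(* Let $\mathcal A_1,\mathcal A_2,\dots,\mathcal A_d\subset 2^{[n]}$ be pairwise cross-IU, i.e. for all $i\neq j$ and all $A\in\mathcal A_i$, $B\in\mathcal A_j$ we have $A\cap B\neq\emptyset$ and $A\cup B\neq[n]$. Then $$\sum_{i=1}^d|\mathcal A_i|\le\max\{2^n,\ d\cdot 2^{n-2}\}.$$
   Context: $[n]=\{1,\dots,n\}$ and $2^{[n]}$ is its power set. *)

(* Defs.v *)
From mathcomp Require Import all_boot.
Set Implicit Arguments. Unset Strict Implicit. Unset Printing Implicit Defensive.

(* [n] is modelled as the finite type 'I_n; subsets of [n] are {set 'I_n};
   a family A ⊂ 2^[n] is a {set {set 'I_n}}. *)

Definition cross_IU (n : nat) (F G : {set {set 'I_n}}) : Prop :=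
  forall A B, A \in F -> B \in G -> A :&: B != set0 /\ A :|: B != [set: 'I_n].

(* Main.v *)
Require Import Defs.
From mathcomp Require Import all_boot.
From mathcomp Require Import zify.
Set Implicit Arguments. Unset Strict Implicit. Unset Printing Implicit Defensive.

Lemma split_card (T : finType) (x : T) (F : {set {set T}}) :
  #|F| = #|[set X in F | x \notin X]| + #|[set X : {set T} | (x \notin X) && (x |: X \in F)]|.
Proof.
rewrite -(cardsID [set X : {set T} | x \in X] F) addnC.
congr (_ + _).
  by apply: eq_card => X; rewrite !inE andbC.
have -> : F :&: [set X : {set T} | x \in X] =
   (fun X => x |: X) @: [set X : {set T} | (x \notin X) && (x |: X \in F)].
  apply/setP => Y; rewrite !inE; apply/andP/imsetP.
    move=> [YF xY]; exists (Y :\ x); first by rewrite !inE eqxx /= setD1K.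
    by rewrite setD1K.
  move=> [X]; rewrite inE => /andP[xX XF] ->; split => //.
  by rewrite !inE eqxx.
apply: card_in_imset => X Y; rewrite !inE => /andP[xX _] /andP[xY _] E.
by rewrite -(setU1K xX) -(setU1K xY) E.
Qed.

Lemma HK (T : finType) k : forall (G : {set T}) (U D : {set {set T}}),
  #|G| = k ->
  (forall X, X \in U -> X \subset G) -> (forall X, X \in D -> X \subset G) ->
  (forall X Y : {set T}, X \in U -> X \subset Y -> Y \subset G -> Y \in U) ->
  (forall X Y : {set T}, X \in D -> Y \subset X -> Y \in D) ->
  2 ^ k * #|U :&: D| <= #|U| * #|D|.
Proof.
elim: k => [|k IH] G U D cG sU sD upU dnD.
  move/cards0_eq: cG => G0; subst G.
  case: (set_0Vmem (U :&: D)) => [->|[X HX]]; first by rewrite cards0 muln0.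
  have H1 : #|U :&: D| <= 1.
    rewrite -(cards1 X); apply: subset_leq_card; apply/subsetP => Y HY.
    move: HX HY; rewrite !inE => /andP[XU _] /andP[YU _].
    move: (sU _ XU) (sU _ YU); rewrite !subset0 => /eqP -> /eqP ->.
    by [].
  move: HX; rewrite inE => /andP[XU XD].
  have hU : 0 < #|U| by apply/card_gt0P; exists X.
  have hD : 0 < #|D| by apply/card_gt0P; exists X.
  rewrite expn0 mul1n; nia.
have [x xG] : exists x, x \in G.
  by apply/card_gt0P; rewrite cG.
set G' := G :\ x.
have cG' : #|G'| = k by move: cG; rewrite (cardsD1 x) xG add1n => -[].
have sG' : G' \subset G by apply: subD1set.
set U0 := [set X in U | x \notin X].
set U1 := [set X : {set T} | (x \notin X) && (x |: X \in U)].
set D0 := [set X in D | x \notin X].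
set D1 := [set X : {set T} | (x \notin X) && (x |: X \in D)].
have I0 : [set X in U :&: D | x \notin X] = U0 :&: D0.
  by apply/setP => X; rewrite !inE; case: (X \in U); case: (X \in D); case: (x \in X).
have I1 : [set X : {set T} | (x \notin X) && (x |: X \in U :&: D)] = U1 :&: D1.
  by apply/setP => X; rewrite !inE; case: (x |: X \in U); case: (x |: X \in D); case: (x \in X).
have xsub : forall X : {set T}, X \subset G -> x |: X \subset G.
  by move=> X XG; rewrite subUset sub1set xG XG.
have H0 := IH G' U0 D0 cG'.
have H1 := IH G' U1 D1 cG'.
have e0 : 2 ^ k * #|U0 :&: D0| <= #|U0| * #|D0|.
  apply: H0.
  - by move=> X; rewrite inE => /andP[XU xX]; rewrite subsetD1 sU.
  - by move=> X; rewrite inE => /andP[XD xX]; rewrite subsetD1 sD.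
  - move=> X Y; rewrite !inE => /andP[XU _] XY; rewrite subsetD1 => /andP[YG ->].
    by rewrite (upU X Y).
  - move=> X Y; rewrite !inE => /andP[XD xX] YX; rewrite (dnD X Y) //=.
    by apply: contra xX; apply: (subsetP YX).
have e1 : 2 ^ k * #|U1 :&: D1| <= #|U1| * #|D1|.
  apply: H1.
  - move=> X; rewrite inE => /andP[xX XU]; rewrite subsetD1 xX andbT.
    by apply: subset_trans (sU _ XU); apply: subsetUr.
  - move=> X; rewrite inE => /andP[xX XD]; rewrite subsetD1 xX andbT.
    by apply: subset_trans (sD _ XD); apply: subsetUr.
  - move=> X Y; rewrite !inE => /andP[_ XU] XY; rewrite subsetD1 => /andP[YG ->] /=.
    by apply: (upU (x |: X)) => //; [apply: setUS | apply: xsub].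
  - move=> X Y; rewrite !inE => /andP[xX XD] YX; apply/andP; split.
      by apply: contra xX; apply: (subsetP YX).
    by apply: (dnD (x |: X)) => //; apply: setUS.
have u01 : #|U0| <= #|U1|.
  apply: subset_leq_card; apply/subsetP => X; rewrite !inE => /andP[XU xX].
  rewrite xX /=; apply: (upU X) => //; first by apply: subsetUr.
  by apply: xsub; apply: sU.
have d10 : #|D1| <= #|D0|.
  apply: subset_leq_card; apply/subsetP => X; rewrite !inE => /andP[xX XD].
  rewrite xX andbT; apply: (dnD (x |: X)) => //; apply: subsetUr.
rewrite (split_card x U) (split_card x D) (split_card x (U :&: D)) I0 I1.
rewrite -/U0 -/U1 -/D0 -/D1 expnS.
nia.
Qed.

Lemma card_disj (T : finType) (A B : {set {set T}}) :
  (forall Y, Y \in A -> Y \in B -> False) -> #|A| + #|B| <= 2 ^ #|T|.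
Proof.
move=> H.
have AB0 : A :&: B = set0 by apply/setP => Y; rewrite !inE; apply/negP => /andP[] /H h /h.
rewrite -(cardsUI A B) AB0 cards0 addn0 -cardsT -card_powerset.
by apply: subset_leq_card; apply/subsetP => Y _; rewrite inE subsetT.
Qed.

Lemma half_bound (T : finType) (F : {set {set T}}) :
  (forall Y Z, Y \in F -> Z \in F -> Y = ~: Z -> False) -> 2 * #|F| <= 2 ^ #|T|.
Proof.
move=> H; rewrite mul2n -addnn.
rewrite -{2}(card_imset F (@setC_inj T)).
apply: card_disj => Y YF /imsetP[Z ZF E]; exact: H YF ZF E.
Qed.

Lemma key (T : finType) (W V : {set {set T}}) : W \subset V ->
  (forall X Y, X \in W -> Y \in V -> X :&: Y != set0 /\ X :|: Y != setT) ->
  3 * #|W| + #|V| <= 2 ^ #|T|.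
Proof.
move=> WV P.
set U := [set Y : {set T} | [exists X in W, X \subset Y]].
set D := [set Y : {set T} | [exists X in W, Y \subset X]].
have hk := @HK T #|T| setT U D (cardsT T)
  (fun X _ => subsetT X) (fun X _ => subsetT X).
have hk' : 2 ^ #|T| * #|U :&: D| <= #|U| * #|D|.
  apply: hk.
    move=> X Y; rewrite !inE => /existsP[Z /andP[ZW ZX]] XY _.
    by apply/existsP; exists Z; rewrite ZW (subset_trans ZX XY).
  move=> X Y; rewrite !inE => /existsP[Z /andP[ZW ZX]] XY.
  by apply/existsP; exists Z; rewrite ZW (subset_trans XY ZX).
have hU : 2 * #|U| <= 2 ^ #|T|.
  apply: half_bound => Y Z; rewrite !inE => /existsP[X1 /andP[X1W X1Y]]
     /existsP[X2 /andP[X2W X2Z]] E.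
  have [h _] := P X1 X2 X1W (subsetP WV _ X2W).
  move/negP: h; apply; rewrite -subset0.
  have : Y :&: Z \subset set0 by rewrite E setIC setICr.
  by apply: subset_trans; apply: setISS.
have hD : 2 * #|D| <= 2 ^ #|T|.
  apply: half_bound => Y Z; rewrite !inE => /existsP[X1 /andP[X1W X1Y]]
     /existsP[X2 /andP[X2W X2Z]] E.
  have [_ h] := P X1 X2 X1W (subsetP WV _ X2W).
  move/negP: h; apply; rewrite eqEsubset subsetT /=.
  have : setT \subset Y :|: Z by rewrite E setUC setUCr.
  by move/subset_trans; apply; apply: setUSS.
have hV : #|V| + #|U :|: D| <= 2 ^ #|T|.
  rewrite -(card_imset (U :|: D) (@setC_inj T)).
  apply: card_disj => Y YV /imsetP[Z]; rewrite !inE => /orP[] /existsP[X /andP[XW XZ]] E.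
    have [h _] := P X Y XW YV; move/negP: h; apply; rewrite -subset0.
    have : Z :&: Y \subset set0 by rewrite E setICr.
    by apply: subset_trans; apply: setSI.
  have [_ h] := P X Y XW YV; move/negP: h; apply; rewrite eqEsubset subsetT /=.
  have : setT \subset Z :|: Y by rewrite E setUCr.
  by move/subset_trans; apply; apply: setSU.
have hW : #|W| <= #|U :&: D|.
  apply: subset_leq_card; apply/subsetP => X XW; rewrite !inE.
  by apply/andP; split; apply/existsP; exists X; rewrite XW subxx.
have hUI := cardsUI U D.
set N := 2 ^ #|T| in hk' hU hD hV *.
have Npos : 0 < N by rewrite expn_gt0.
have t1 : 2 * #|U| * #|D| <= N * #|D| := leq_mul hU (leqnn _).
have t2 : #|U| * (2 * #|D|) <= #|U| * N := leq_mul (leqnn _) hD.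
have m1 : 2 * #|U :&: D| <= #|D|.
  rewrite -(leq_pmul2l Npos); nia.
have m2 : 2 * #|U :&: D| <= #|U|.
  rewrite -(leq_pmul2l Npos); nia.
lia.
Qed.

Theorem theorem1p10 (n d : nat) (A : 'I_d -> {set {set 'I_n}}) :
  (forall i j : 'I_d, i != j -> cross_IU (A i) (A j)) ->
  4 * (\sum_(i < d) #|A i|) <= maxn (4 * 2 ^ n) (d * 2 ^ n).
Proof.
move=> H.
pose c (X : {set 'I_n}) := #|[set i | X \in A i]|.
set W := [set X : {set 'I_n} | 2 <= c X].
set S := [set X : {set 'I_n} | c X == 1].
have Esum : \sum_(i < d) #|A i| = \sum_X c X.
  transitivity (\sum_(i < d) \sum_X (X \in A i : nat)).
    apply: eq_bigr => i _; rewrite -sum1_card big_mkcond /=.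
    by apply: eq_bigr => X _; case: (X \in A i).
  rewrite exchange_big /=; apply: eq_bigr => X _.
  rewrite /c -sum1_card [RHS]big_mkcond /=.
  by apply: eq_bigr => i _; rewrite inE; case: (X \in A i).
have Hle : \sum_X c X <= d * #|W| + #|S|.
  have -> : d * #|W| + #|S| = \sum_X (d * (X \in W) + (X \in S)).
    rewrite big_split /= -big_distrr /= -!sum1_card !(big_mkcond (fun X => X \in _)) /=.
    congr (d * _ + _); apply: eq_bigr => X _; by case: (X \in _).
  apply: leq_sum => X _; rewrite !inE.
  have : c X <= d by rewrite -(card_ord d); apply: max_card.
  case: (c X) => [|[|m]] //= h.
  by rewrite muln0. by rewrite muln1 addn0.
have ex1 : forall X, 0 < c X -> exists j, X \in A j.
  move=> X /card_gt0P[j]; rewrite inE => h; by exists j.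
have ex2 : forall X j, 2 <= c X -> exists2 i, i != j & X \in A i.
  move=> X j h.
  have : 0 < #|[set i | X \in A i] :\ j|.
    move: h; rewrite /c (cardsD1 j); case: (j \in _) => /=; lia.
  move/card_gt0P => [i]; rewrite !inE => /andP[ij Xi]; by exists i.
have WS0 : W :&: S = set0.
  apply/setP => X; rewrite !inE; apply/negP => /andP[h /eqP e]; by rewrite e in h.
have hk := @key _ W (W :|: S) (subsetUl _ _).
have hk2 : 3 * #|W| + #|W :|: S| <= 2 ^ #|'I_n|.
  apply: hk => X Y XW YV.
  have [j Yj] : exists j, Y \in A j.
    apply: ex1; move: YV; rewrite !inE => /orP[]; [lia | by move/eqP ->].
  have XW2 : 2 <= c X by move: XW; rewrite inE.
  have [i ij Xi] := ex2 X j XW2.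
  exact: (H i j ij X Y Xi Yj).
  have eWS : #|W :|: S| = #|W| + #|S| by rewrite -cardsUI WS0 cards0 addn0.
move: hk2; rewrite card_ord eWS => hk2.
rewrite Esum.
have : 4 * \sum_X c X <= 4 * (d * #|W| + #|S|) by rewrite leq_mul2l Hle orbT.
move: (\sum_X c X) => s hs.
have e : 4 * #|W| <= 2 ^ n by lia.
move: (2 ^ n) hk2 e => N hk2 e.
case: (leqP d 4) => hd.
  apply: leq_trans (leq_maxl _ _).
  apply: leq_trans hs _; rewrite leq_mul2l /=.
  have : d * #|W| <= 4 * #|W| by rewrite leq_mul2r hd orbT.
  move=> h; apply: leq_trans (leq_add h (leqnn #|S|)) _; lia.
apply: leq_trans (leq_maxr _ _).
apply: leq_trans hs _; nia.
Qed.
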